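(* Let $\gamma>0$. Let $(\mathbf{x},\mathbf{u})$ have joint density $p(\mathbf{x},\mathbf{u})=(1-\epsilon(\mathbf{u}))p^{\star}(\mathbf{x},\mathbf{u})+\epsilon(\mathbf{u})\delta(\mathbf{x},\mathbf{u})$ with marginals $p(\mathbf{x})$, $p(\mathbf{u})$, and let a binary label $y\in\{0,1\}$ satisfy $p(y=0)=p(y=1)=\tfrac12$, $p(\mathbf{x},\mathbf{u}|y=1)=p(\mathbf{x},\mathbf{u})$ and $p(\mathbf{x},\mathbf{u}|y=0)=p(\mathbf{x})p(\mathbf{u})$. For a positive function $r(\mathbf{x},\mathbf{u})$ define the $\gamma$-cross entropy $$d_\gamma(p(y|\mathbf{x},\mathbf{u}),r(\mathbf{x},\mathbf{u});p(\mathbf{x},\mathbf{u})):=-\frac{1}{\gamma}\log\iint\sum_{y=0}^{1}\left\{\frac{r(\mathbf{x},\mathbf{u})^{y(\gamma+1)}}{1+r(\mathbf{x},\mathbf{u})^{\gamma+1}}\right\}^{\frac{\gamma}{\gamma+1}}p(y,\mathbf{x},\mathbf{u})\,d\mathbf{x}\,d\mathbf{u},$$ and let $$\nu:=\iint\left\{\frac{r(\mathbf{x},\mathbf{u})^{\gamma+1}}{1+r(\mathbf{x},\mathbf{u})^{\gamma+1}}\right\}^{\frac{\gamma}{\gamma+1}}\epsilon(\mathbf{u})\delta(\mathbf{x},\mathbf{u})\,d\mathbf{x}\,d\mathbf{u}.$$ Assume $\nu$ is sufficiently small. Then $$d_\gamma(p(y|\mathbf{x},\mathbf{u}),r(\mathbf{x},\mathbf{u});p(\mathbf{x},\mathbf{u}))=J[r]+O(\nu),$$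 where $$J[r]:=-\frac{1}{\gamma}\log\left[\frac12\iint\left\{\frac{1}{1+r(\mathbf{x},\mathbf{u})^{\gamma+1}}\right\}^{\frac{\gamma}{\gamma+1}}p(\mathbf{x})p(\mathbf{u})\,d\mathbf{x}\,d\mathbf{u}+\frac12\iint\left\{\frac{r(\mathbf{x},\mathbf{u})^{\gamma+1}}{1+r(\mathbf{x},\mathbf{u})^{\gamma+1}}\right\}^{\frac{\gamma}{\gamma+1}}(1-\epsilon(\mathbf{u}))p^{\star}(\mathbf{x},\mathbf{u})\,d\mathbf{x}\,d\mathbf{u}\right].$$ Furthermore, if $p(\mathbf{x})$, $p(\mathbf{u})$ and $r(\mathbf{x},\mathbf{u})$ are positive for all $\mathbf{x},\mathbf{u}$, then $J[r]$ is minimized at $$r^{\star}(\mathbf{x},\mathbf{u})=\frac{(1-\epsilon(\mathbf{u}))p^{\star}(\mathbf{x}|\mathbf{u})}{p(\mathbf{x})}.$$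
   Context: Here $p^{\star}(\mathbf{x},\mathbf{u})=p^{\star}(\mathbf{x}|\mathbf{u})p(\mathbf{u})$ is the target (noncontaminated) joint density, $\delta(\mathbf{x},\mathbf{u})=\delta(\mathbf{x}|\mathbf{u})p(\mathbf{u})$ is an outlier density, and $\epsilon(\mathbf{u})\in[0,1)$ is a contamination ratio that may depend on $\mathbf{u}$ (it is not assumed small). $p(\mathbf{x})=\int p(\mathbf{x}|\mathbf{u})p(\mathbf{u})d\mathbf{u}$ is the contaminated marginal. $p(y,\mathbf{x},\mathbf{u})=p(\mathbf{x},\mathbf{u}|y)p(y)$. $O(\nu)$ denotes a term bounded by a constant times $\nu$ as $\nu\to0$. *)

(* Defs.v *)
From HB Require Import structures.
From mathcomp Require Import all_boot all_order all_algebra.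
From mathcomp Require Import all_classical all_reals all_analysis.
Set Implicit Arguments. Unset Strict Implicit. Unset Printing Implicit Defensive.
Import Order.TTheory GRing.Theory Num.Theory.
Import numFieldNormedType.Exports.
Local Open Scope classical_set_scope.
Local Open Scope ring_scope.

Section Defs.
Context (R : realType) (dx du : measure_display)
  (X : measurableType dx) (U : measurableType du)
  (mux : {sigma_finite_measure set X -> \bar R})
  (muu : {sigma_finite_measure set U -> \bar R}).

Definition joint_of_cond (pc : X -> U -> R) (pu : U -> R) (x : X) (u : U) : R :=
  pc x u * pu u.

Definition pcontam (eps : U -> R) (pstar delta : X -> U -> R) (x : X) (u : U) : R :=
  (1 - eps u) * pstar x u + eps u * delta x u.

Definition marg_x (pj : X -> U -> R) (x : X) : R :=
  \int[muu]_(u in setT) pj x u.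

Definition p_y_xu (pj : X -> U -> R) (pu : U -> R) (y : nat) (x : X) (u : U) : R :=
  (if y == 1%N then pj x u else marg_x pj x * pu u) * (1 / 2).

Definition wgt (g : R) (r : R) (y : nat) : R :=
  ((r `^ (y%:R * (g + 1))) / (1 + r `^ (g + 1))) `^ (g / (g + 1)).

Definition dgamma (g : R) (r : X -> U -> R) (pyxu : nat -> X -> U -> R) : R :=
  - (1 / g) * ln (\int[(mux \x muu)%E]_(z in setT)
       (\sum_(y < 2) wgt g (r z.1 z.2) y * pyxu y z.1 z.2)).

Definition nu (g : R) (r : X -> U -> R) (eps : U -> R) (delta : X -> U -> R) : R :=
  \int[(mux \x muu)%E]_(z in setT) (wgt g (r z.1 z.2) 1 * (eps z.2 * delta z.1 z.2)).

Definition Jr (g : R) (r : X -> U -> R) (px : X -> R) (pu : U -> R)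
    (eps : U -> R) (pstar : X -> U -> R) : R :=
  - (1 / g) * ln (
      (1 / 2) * (\int[(mux \x muu)%E]_(z in setT)
                   (wgt g (r z.1 z.2) 0 * (px z.1 * pu z.2)))
    + (1 / 2) * (\int[(mux \x muu)%E]_(z in setT)
                   (wgt g (r z.1 z.2) 1 * ((1 - eps z.2) * pstar z.1 z.2)))).

End Defs.

Definition cond_density (R : realType) (dx du : measure_display)
  (X : measurableType dx) (U : measurableType du)
  (mux : {measure set X -> \bar R}) (pc : X -> U -> R) : Prop :=
  measurable_fun setT (fun z : X * U => pc z.1 z.2) /\
  (forall x u, 0 <= pc x u) /\
  (forall u, mux.-integrable setT (fun x => (pc x u)%:E) /\
             \int[mux]_(x in setT) pc x u = 1).

Definition density (R : realType) (du : measure_display) (U : measurableType du)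
  (muu : {measure set U -> \bar R}) (p : U -> R) : Prop :=
  measurable_fun setT p /\ (forall u, 0 <= p u) /\
  muu.-integrable setT (fun u => (p u)%:E) /\ \int[muu]_(u in setT) p u = 1.

(* Main.v *)
Require Import Defs.
From HB Require Import structures.
From mathcomp Require Import all_boot all_order all_algebra.
From mathcomp Require Import all_classical all_reals all_analysis.
From mathcomp Require Import measurable_realfun.
From mathcomp Require Import ring lra.
Import Order.TTheory GRing.Theory Num.Theory.
Import numFieldNormedType.Exports.
Local Open Scope classical_set_scope.
Local Open Scope ring_scope.

Section RealPart.
Context {R : realType}.

Lemma wgt0E (g r : R) : wgt g r 0 = (1 / (1 + r `^ (g + 1))) `^ (g / (g + 1)).
Proof. by rewrite /wgt mul0r powRr0. Qed.

Lemma wgt1E (g r : R) : wgt g r 1 = (r `^ (g + 1) / (1 + r `^ (g + 1))) `^ (g / (g + 1)).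
Proof. by rewrite /wgt mul1r. Qed.

Lemma wgt_ge0 (g r : R) y : 0 <= wgt g r y.
Proof. exact: powR_ge0. Qed.

Lemma powR_invr (x : R) : 0 <= x -> forall y, (x^-1) `^ y = (x `^ y)^-1.
Proof. by move=> x0 y; rewrite -powR_inv1 // -powRrM mulN1r powRN. Qed.

Lemma wgt_upper (g A B r : R) : 0 < g -> 0 <= A -> 0 <= B -> 0 <= r ->
  wgt g r 0 * A + wgt g r 1 * B <= (A `^ (g+1) + B `^ (g+1)) `^ (g+1)^-1.
Proof.
move=> g0 A0 B0 r0.
have q0 : 0 < g + 1 by rewrite addr_gt0.
have gn0 : g != 0 by rewrite gt_eqF.
have qn0 : g + 1 != 0 by rewrite gt_eqF.
have p0 : 0 < (g + 1) / g by rewrite divr_gt0.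
have pq : ((g + 1) / g)^-1 + (g + 1)^-1 = 1.
  by rewrite invf_div; field.
have H := @hoelder2 R _ _ _ _ _ _ (wgt_ge0 g r 0) (wgt_ge0 g r 1) A0 B0 p0 q0 pq.
move: H.
have ap : g / (g + 1) * ((g + 1) / g) = 1 by field; rewrite ?gn0 ?qn0.
have u0 : 0 <= r `^ (g + 1) by exact: powR_ge0.
have den : 0 < 1 + r `^ (g + 1) by apply: (lt_le_trans ltr01); rewrite lerDl.
have d1 : 0 <= 1 / (1 + r `^ (g + 1)) by rewrite divr_ge0 // ltW.
have d2 : 0 <= r `^ (g + 1) / (1 + r `^ (g + 1)) by rewrite divr_ge0 // ltW.
rewrite wgt0E wgt1E -!powRrM ap (powRr1 d1) (powRr1 d2).
rewrite -mulrDl.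
rewrite divff ?gt_eqF // powR1 mul1r.
by rewrite mul1r.
Qed.

Lemma wgt_rhs (g A B : R) : 0 < g -> 0 < A -> 0 <= B ->
  wgt g (B / A) 0 * A + wgt g (B / A) 1 * B = (A `^ (g+1) + B `^ (g+1)) `^ (g+1)^-1.
Proof.
move=> g0 A0 B0.
have q0 : 0 < g + 1 by rewrite addr_gt0.
have gn0 : g != 0 by rewrite gt_eqF.
have qn0 : g + 1 != 0 by rewrite gt_eqF.
have Aq : 0 < A `^ (g + 1) by exact: powR_gt0.
have Bq : 0 <= B `^ (g + 1) by exact: powR_ge0.
set S := A `^ (g + 1) + B `^ (g + 1).
have S0 : 0 < S by rewrite /S ltr_pwDl.
have tq : (B / A) `^ (g + 1) = B `^ (g + 1) / A `^ (g + 1).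
  have Ai : 0 <= A^-1 by rewrite invr_ge0 ltW.
  by rewrite (powRM _ B0 Ai) powR_invr // ltW.
have e0 : 1 / (1 + (B / A) `^ (g + 1)) = A `^ (g + 1) / S.
  rewrite tq /S; field; apply/andP; split; rewrite gt_eqF //.
have e1 : (B / A) `^ (g + 1) / (1 + (B / A) `^ (g + 1)) = B `^ (g + 1) / S.
  by rewrite -[X in X / _]mul1r mulrAC [1 / _]e0 tq; field; rewrite !gt_eqF.
rewrite wgt0E wgt1E e0 e1.
have Si : 0 <= S^-1 by rewrite invr_ge0 ltW.
rewrite !(powRM _ (powR_ge0 _ _) Si) (powR_invr _ (ltW S0)) -!powRrM.
have qa : (g + 1) * (g / (g + 1)) = g by field; rewrite ?gn0 ?qn0.
rewrite qa.
rewrite -!mulrA [_^-1 * A]mulrC [_^-1 * B]mulrC !mulrA.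
rewrite -{2}(powRr1 (ltW A0)) -{2}(powRr1 B0) -!powRD ?qn0 ?implybT //.
rewrite -mulrDl -/S.
rewrite -{1}(powRr1 (ltW S0)) -powRB ?(gt_eqF S0) ?implybT //.
  congr (_ `^ _); first by field; rewrite ?gn0 ?qn0.
all: by rewrite (negbTE qn0).
Qed.

Lemma ln_bound (g a n : R) : 0 < g -> 0 < a -> 0 <= n ->
  `| - (1 / g) * ln (a + 1 / 2 * n) - - (1 / g) * ln a |
    <= expR (g * (- (1 / g) * ln a)) / (2 * g) * n.
Proof.
move=> g0 a0 n0.
have gn0 : g != 0 by rewrite gt_eqF.
have an0 : a != 0 by rewrite gt_eqF.
set t := n / (2 * a).
have t0 : 0 <= t by rewrite /t divr_ge0 // mulr_ge0 // ltW.
have e1 : a + 1 / 2 * n = a * (1 + t) by rewrite /t; field.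
have p1 : 0 < 1 + t by apply: (lt_le_trans ltr01); rewrite lerDl.
rewrite e1 lnM ?posrE //.
have -> : - (1 / g) * (ln a + ln (1 + t)) - - (1 / g) * ln a = - ((1 / g) * ln (1 + t)).
  by ring.
rewrite normrN ger0_norm; last by rewrite mulr_ge0 // ?ln_ge0 ?lerDl // divr_ge0 // ltW.
have -> : g * (- (1 / g) * ln a) = - ln a by field.
rewrite expRN lnK ?posrE //.
have -> : a^-1 / (2 * g) * n = 1 / g * t by rewrite /t; field; rewrite an0 gn0.
rewrite ler_pM2l ?divr_gt0 //.
apply: le_ln1Dx; apply: (lt_le_trans _ t0); rewrite oppr_lt0 ltr01 //.
Qed.

End RealPart.

Section Meas.
Context (R : realType) (dx du : measure_display)
  (X : measurableType dx) (U : measurableType du)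
  (mux : {sigma_finite_measure set X -> \bar R})
  (muu : {sigma_finite_measure set U -> \bar R}).

Lemma Rint1E d (T : measurableType d) (mu : {measure set T -> \bar R}) (f : T -> R) :
  mu.-integrable setT (fun x => (f x)%:E) -> Rintegral mu setT f = 1 ->
  (\int[mu]_x (f x)%:E = 1)%E.
Proof.
move=> fi f1; have fin := integrable_fin_num measurableT fi.
by rewrite -(fineK fin); move: f1; rewrite /Rintegral => ->.
Qed.
Arguments Rint1E {d T mu f}.

Lemma int_prod_cd (pc : X -> U -> R) (pu : U -> R) :
  cond_density mux pc -> density muu pu ->
  (\int[mux \x muu]_z (pc z.1 z.2 * pu z.2)%:E = 1)%E.
Proof.
move=> [mpc [pc0 ipc]] [mpu [pu0 [ipu Ipu]]].
have mpu2 : measurable_fun setT (fun z : X * U => pu z.2).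
  exact: measurableT_comp mpu measurable_snd.
have mf : measurable_fun [set: X * U] (EFin \o (fun z : X * U => pc z.1 z.2 * pu z.2)).
  by apply/measurable_EFinP; apply: measurable_funM.
rewrite (fubini_tonelli2 _ mf); last by move=> z; rewrite lee_fin mulr_ge0.
rewrite /fubini_G /=.
transitivity (\int[muu]_y (pu y)%:E)%E; last exact: Rint1E.
apply: eq_integral => u _ /=.
have [iu Iu] := ipc u.
under eq_integral do rewrite EFinM.
rewrite ge0_integralZr //; first by rewrite (Rint1E iu Iu) mul1e.
- by case/integrableP: iu.
- by move=> x _; rewrite lee_fin.
- by rewrite lee_fin.
Qed.
Arguments int_prod_cd {pc pu}.



Local Notation P := (mux \x muu)%E.

Lemma invE_powR (x : R) : 0 <= x -> x^-1 = x `^ (-1).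
Proof. by move=> x0; rewrite powR_inv1. Qed.

Lemma measurable_inv_ge0 d (T : measurableType d) (f : T -> R) :
  measurable_fun setT f -> (forall t, 0 <= f t) ->
  measurable_fun setT (fun t => (f t)^-1).
Proof.
move=> mf f0.
have -> : (fun t => (f t)^-1) = (fun t => (f t) `^ (-1)).
  by apply/funext => t; rewrite invE_powR.
exact: measurableT_comp (measurable_powR _) mf.
Qed.

Lemma measurable_wgt d (T : measurableType d) (g : R) (rr : T -> R) (y : nat) :
  measurable_fun setT rr -> measurable_fun setT (fun t => wgt g (rr t) y).
Proof.
move=> mr; rewrite /wgt.
apply: (measurableT_comp (measurable_powR _)).
apply: measurable_funM.
  exact: measurableT_comp (measurable_powR _) mr.
apply: measurable_inv_ge0; last by move=> t; rewrite addr_ge0 // powR_ge0.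
apply: measurable_funD; first exact: measurable_cst.
exact: measurableT_comp (measurable_powR _) mr.
Qed.

Lemma wgt_le1 (g r : R) (y : nat) : 0 <= g -> 0 <= r -> (y <= 1)%N -> wgt g r y <= 1.
Proof.
move=> g0 r0 y1.
have u0 : 0 <= r `^ (g + 1) by exact: powR_ge0.
have den : 0 < 1 + r `^ (g + 1) by apply: (lt_le_trans ltr01); rewrite lerDl.
have a0 : 0 <= g / (g + 1) by rewrite divr_ge0 // addr_ge0.
have H : forall x, 0 <= x <= 1 -> x `^ (g / (g + 1)) <= 1.
  move=> x /andP[x0 x1].
  have := @ge0_ler_powR R _ a0 x 1; rewrite !nnegrE => /(_ x0 ler01 x1).
  by rewrite powR1.
case: y y1 => [|[|//]] _.
- rewrite wgt0E; apply: H; apply/andP; split; first by rewrite divr_ge0 // ltW.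
  by rewrite ler_pdivrMr // mul1r lerDl.
- rewrite wgt1E; apply: H; apply/andP; split; first by rewrite divr_ge0 // ltW.
  by rewrite ler_pdivrMr // mul1r lerDr.
Qed.

Lemma integrable_le (f h : X * U -> R) :
  measurable_fun setT f -> (forall z, 0 <= f z <= h z) ->
  P.-integrable setT (EFin \o h) -> P.-integrable setT (EFin \o f).
Proof.
move=> mf fh ih; apply: le_integrable ih => //.
  exact/measurable_EFinP.
move=> z _ /=; have /andP[f0 fh'] := fh z.
by rewrite lee_fin !ger0_norm // (le_trans f0).
Qed.
Arguments integrable_le {f h}.


Lemma integrableD_R (f h : X * U -> R) :
  P.-integrable setT (EFin \o f) -> P.-integrable setT (EFin \o h) ->
  P.-integrable setT (EFin \o (fun z => f z + h z)).
Proof.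
move=> fi hi.
have -> : EFin \o (fun z => f z + h z) = ((EFin \o f) \+ (EFin \o h))%E by apply/funext.
exact: integrableD.
Qed.
Arguments integrableD_R {f h}.


Lemma integrable_cd (pc : X -> U -> R) (pu : U -> R) :
  cond_density mux pc -> density muu pu ->
  P.-integrable setT (EFin \o (fun z : X * U => pc z.1 z.2 * pu z.2)).
Proof.
move=> cd dp; have I1 := int_prod_cd cd dp.
case: cd => [mpc [pc0 _]]; case: dp => [mpu [pu0 _]].
apply/integrableP; split.
  apply/measurable_EFinP; apply: measurable_funM => //.
  exact: measurableT_comp mpu measurable_snd.
rewrite (eq_integral (fun z : X * U => (pc z.1 z.2 * pu z.2)%:E)).
  by rewrite I1 ltry.
by move=> z _ /=; rewrite ger0_norm // mulr_ge0.
Qed.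
Arguments integrable_cd {pc pu}.



Lemma marg_props (pj : X -> U -> R) :
  measurable_fun setT (fun z : X * U => pj z.1 z.2) -> (forall x u, 0 <= pj x u) ->
  measurable_fun setT (marg_x muu pj) /\ (forall x, 0 <= marg_x muu pj x) /\
  (\int[mux]_x (marg_x muu pj x)%:E <= \int[P]_z (pj z.1 z.2)%:E)%E.
Proof.
move=> mpj pj0.
set F := fubini_F muu (EFin \o (fun z : X * U => pj z.1 z.2)).
have mf : measurable_fun setT (EFin \o (fun z : X * U => pj z.1 z.2)).
  exact/measurable_EFinP.
have f0 : forall z, (0 <= (EFin \o (fun z : X * U => pj z.1 z.2)) z)%E.
  by move=> z; rewrite lee_fin.
have mF : measurable_fun setT F := measurable_fun_fubini_tonelli_F _ mf f0.
have F0 : forall x, (0 <= F x)%E.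
  by move=> x; apply: integral_ge0 => u _; rewrite lee_fin.
have margE : marg_x muu pj = fun x => fine (F x) by [].
have mm : measurable_fun setT (marg_x muu pj).
  rewrite margE; exact: measurableT_comp (fine_measurable measurableT) mF.
split; [exact: mm|split].
- by move=> x; rewrite margE; exact: fine_ge0.
- rewrite (fubini_tonelli1 _ mf f0) -/F; apply: ge0_le_integral => //.
  + by move=> x _; rewrite lee_fin margE fine_ge0.
  + exact/measurable_EFinP.
  + move=> x _; rewrite margE /=; have := F0 x.
    by case: (F x) => [r| |] //= _; rewrite ?lexx ?leey.
Qed.
Arguments marg_props {pj}.


Lemma int_marg_pu (pj : X -> U -> R) (pu : U -> R) :
  measurable_fun setT (fun z : X * U => pj z.1 z.2) -> (forall x u, 0 <= pj x u) ->
  density muu pu ->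
  (\int[P]_z ((marg_x muu pj z.1 * pu z.2)%:E) <= \int[P]_z (pj z.1 z.2)%:E)%E.
Proof.
move=> mpj pj0 dp.
have [mpx [px0 Hle]] := marg_props mpj pj0.
have dp' := dp; case: dp' => [mpu [pu0 [ipu Ipu]]].
have mf2 : measurable_fun setT (EFin \o (fun z : X * U => marg_x muu pj z.1 * pu z.2)).
  apply/measurable_EFinP; apply: measurable_funM.
    exact: measurableT_comp mpx measurable_fst.
  exact: measurableT_comp mpu measurable_snd.
have f20 : forall z, (0 <= (EFin \o (fun z : X * U => (marg_x muu pj z.1 * pu z.2)%R)) z)%E.
  by move=> z; rewrite lee_fin mulr_ge0.
rewrite (fubini_tonelli1 _ mf2 f20); apply: le_trans Hle.
rewrite le_eqVlt; apply/orP; left; apply/eqP.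
apply: eq_integral => x _; rewrite /fubini_F /=.
under eq_integral do rewrite EFinM.
rewrite ge0_integralZl //.
- by rewrite (Rint1E ipu Ipu) mule1.
- by case/integrableP: ipu.
- by move=> u _; rewrite lee_fin.
- by rewrite lee_fin.
Qed.
Arguments int_marg_pu {pj pu}.


Lemma Rint_pos (h k : X * U -> R) :
  P.-integrable setT (EFin \o h) -> (forall z, 0 <= h z) ->
  measurable_fun setT k -> (forall z, h z = 0 -> k z = 0) ->
  (\int[P]_z (k z)%:E = 1)%E -> 0 < Rintegral P setT h.
Proof.
move=> hi h0 mk hk k1.
have mh : measurable_fun setT (EFin \o h) by case/integrableP: hi.
have fin := integrable_fin_num measurableT hi.
rewrite lt0r Rintegral_ge0 ?andbT //; apply/negP => /eqP H0.
have I0 : (\int[P]_z (h z)%:E = 0)%E.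
  by rewrite -(fineK fin); move: H0; rewrite /Rintegral => ->.
have : (\int[P]_z `|(EFin \o h) z| = 0)%E.
  by rewrite -I0; apply: eq_integral => z _; rewrite /= ger0_norm.
move/(ae_eq_integral_abs _ measurableT mh) => [N [mN N0 sub]].
have ae : ae_eq P setT (EFin \o k) (cst 0%E).
  exists N; split => // z /= nz; apply: sub => /= hz; apply: nz => _.
  by have := hz I => /= [[]] /hk ->.
have := ae_eq_integral (cst 0%E) (EFin \o k) measurableT ((measurable_EFinP _ _).2 mk) (measurable_cst _) ae.
rewrite integral0 => E; move: k1; rewrite [X in X = _]E => /eqP; by rewrite eqe eq_sym oner_eq0.
Qed.
Arguments Rint_pos {h k}.



Lemma wgt1_gt0 (g r : R) : 0 < r -> 0 < wgt g r 1.
Proof.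
move=> r0; rewrite wgt1E; apply: powR_gt0; apply: divr_gt0; first exact: powR_gt0.
by apply: (lt_le_trans ltr01); rewrite lerDl powR_ge0.
Qed.

Lemma part1 (g : R) (hg : 0 < g) (pu eps : U -> R) (pstar_c delta_c r : X -> U -> R) :
      density muu pu ->
      measurable_fun setT eps -> (forall u, 0 <= eps u < 1) ->
      cond_density mux pstar_c -> cond_density mux delta_c ->
      measurable_fun setT (fun z : X * U => r z.1 z.2) ->
      (forall x u, 0 < r x u) ->
      let pstar := joint_of_cond pstar_c pu in
      let delta := joint_of_cond delta_c pu in
      let pj := pcontam eps pstar delta in
      let px := marg_x muu pj in
      let J := Jr mux muu g r px pu eps pstar in
      is_true (`| dgamma mux muu g r (p_y_xu muu pj pu) - J |
        <= (expR (g * J) / (2 * g)) * nu mux muu g r eps delta).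
Proof.
move=> dpu meps heps dps dde mr rpos pstar delta pj px J.
have dpu' := dpu; case: dpu' => [mpu [pu0 _]].
have dps' := dps; case: dps' => [mps [ps0 _]].
have dde' := dde; case: dde' => [mde [de0 _]].
have mpu2 : measurable_fun setT (fun z : X * U => pu z.2).
  exact: measurableT_comp mpu measurable_snd.
have meps2 : measurable_fun setT (fun z : X * U => eps z.2).
  exact: measurableT_comp meps measurable_snd.
have mpstar : measurable_fun setT (fun z : X * U => pstar z.1 z.2).
  exact: measurable_funM mps mpu2.
have mdelta : measurable_fun setT (fun z : X * U => delta z.1 z.2).
  exact: measurable_funM mde mpu2.
have ipstar : P.-integrable setT (EFin \o (fun z : X * U => pstar z.1 z.2)).
  exact: integrable_cd dps dpu.
have idelta : P.-integrable setT (EFin \o (fun z : X * U => delta z.1 z.2)).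
  exact: integrable_cd dde dpu.
have pstar0 : forall x u, 0 <= pstar x u.
  by move=> x u; rewrite /pstar /joint_of_cond mulr_ge0.
have delta0 : forall x u, 0 <= delta x u.
  by move=> x u; rewrite /delta /joint_of_cond mulr_ge0.
have e0 : forall u, 0 <= eps u by move=> u; have /andP[] := heps u.
have e1 : forall u, 0 < 1 - eps u by move=> u; have /andP[_ h] := heps u; rewrite subr_gt0.
have e1' : forall u, 1 - eps u <= 1 by move=> u; rewrite lerBlDr lerDl.
have e2 : forall u, eps u <= 1 by move=> u; have /andP[_ h] := heps u; exact: ltW.
have mpj : measurable_fun setT (fun z : X * U => pj z.1 z.2).
  apply: measurable_funD; apply: measurable_funM => //.
  by apply: measurable_funB => //; exact: measurable_cst.
have pj0 : forall x u, 0 <= pj x u.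
  by move=> x u; rewrite /pj /pcontam addr_ge0 // mulr_ge0 // ltW.
have pjle : forall z : X * U, 0 <= pj z.1 z.2 <= pstar z.1 z.2 + delta z.1 z.2.
  move=> z; rewrite pj0 /= /pj /pcontam.
  by rewrite lerD // ler_piMl.
have ipj : P.-integrable setT (EFin \o (fun z : X * U => pj z.1 z.2)).
  exact: integrable_le mpj pjle (integrableD_R ipstar idelta).
have [mpx [px0 Hle]] := marg_props mpj pj0.
have Hle2 := int_marg_pu mpj pj0 dpu.
have mpxpu : measurable_fun setT (fun z : X * U => px z.1 * pu z.2).
  by apply: measurable_funM => //; exact: measurableT_comp mpx measurable_fst.
have ipxpu : P.-integrable setT (EFin \o (fun z : X * U => px z.1 * pu z.2)).
  apply/integrableP; split; first exact/measurable_EFinP.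
  rewrite (eq_integral (fun z : X * U => (px z.1 * pu z.2)%:E)); last first.
    by move=> z _; rewrite /= ger0_norm // mulr_ge0.
  apply: le_lt_trans Hle2 _; rewrite -ge0_fin_numE.
    have H := integrable_fin_num measurableT ipj. exact: H.
  by apply: integral_ge0 => z _; rewrite lee_fin.
set w := fun (y : nat) (z : X * U) => wgt g (r z.1 z.2) y.
have mw : forall y, measurable_fun setT (w y).
  by move=> y; exact: (@measurable_wgt _ _ g _ y mr).
have w01 : forall y, (y <= 1)%N -> forall z, 0 <= w y z <= 1.
  by move=> y y1 z; rewrite wgt_ge0 wgt_le1 // ltW.
set f0 := fun z : X * U => w 0%N z * (px z.1 * pu z.2).
set f1 := fun z : X * U => w 1%N z * ((1 - eps z.2) * pstar z.1 z.2).
set f2 := fun z : X * U => w 1%N z * (eps z.2 * delta z.1 z.2).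
have i0 : P.-integrable setT (EFin \o f0).
  apply: (integrable_le _ _ ipxpu); first exact: measurable_funM.
  move=> z; have /andP[wa wb] := w01 0%N isT z.
  by rewrite mulr_ge0 ?mulr_ge0 //= ler_piMl // mulr_ge0.
have i1 : P.-integrable setT (EFin \o f1).
  apply: (integrable_le _ _ ipstar).
    by apply: measurable_funM => //; apply: measurable_funM => //; apply: measurable_funB => //; exact: measurable_cst.
  move=> z; have /andP[wa wb] := w01 1%N isT z.
  rewrite mulr_ge0 ?mulr_ge0 ?(ltW (e1 _)) //=.
  by rewrite (le_trans (ler_piMl _ wb)) ?mulr_ge0 ?(ltW (e1 _)) // ler_piMl.
have i2 : P.-integrable setT (EFin \o f2).
  apply: (integrable_le _ _ idelta).
    by apply: measurable_funM => //; apply: measurable_funM.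
  move=> z; have /andP[wa wb] := w01 1%N isT z.
  rewrite mulr_ge0 ?mulr_ge0 //=.
  by rewrite (le_trans (ler_piMl _ wb)) ?mulr_ge0 // ler_piMl.
have Hint : Rintegral P setT (fun z : X * U =>
    \sum_(y < 2) wgt g (r z.1 z.2) y * p_y_xu muu pj pu y z.1 z.2) =
    1 / 2 * Rintegral P setT f0 + 1 / 2 * Rintegral P setT f1 +
    1 / 2 * Rintegral P setT f2.
  transitivity (Rintegral P setT (fun z => 1 / 2 * (f0 z + (f1 z + f2 z)))).
    apply: eq_Rintegral => z _.
    have Epj : pj z.1 z.2 = (1 - eps z.2) * pstar z.1 z.2 + eps z.2 * delta z.1 z.2 by [].
    rewrite !big_ord_recl big_ord0 /p_y_xu /= -/px Epj /f0 /f1 /f2 /w.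
    rewrite (_ : bump 0 0 = 1%N) //.
    ring.
  rewrite RintegralZl //; last exact: integrableD_R i0 (integrableD_R i1 i2).
  rewrite RintegralD //; last exact: integrableD_R i1 i2.
  by rewrite RintegralD //; ring.
have HJ : J = - (1 / g) * ln (1 / 2 * Rintegral P setT f0 + 1 / 2 * Rintegral P setT f1).
  by [].
have Hnu : nu mux muu g r eps delta = Rintegral P setT f2 by [].
have Hd : dgamma mux muu g r (p_y_xu muu pj pu) = - (1 / g) * ln (
    (1 / 2 * Rintegral P setT f0 + 1 / 2 * Rintegral P setT f1) +
    1 / 2 * Rintegral P setT f2).
  by rewrite /dgamma Hint.
have pos1 : 0 < Rintegral P setT f1.
  apply: (Rint_pos i1 _ mpstar) => //.
  - move=> z; have /andP[wa wb] := w01 1%N isT z.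
    by rewrite mulr_ge0 ?mulr_ge0 ?(ltW (e1 _)).
  - move=> z /eqP; rewrite /f1 /w !mulf_eq0 (gt_eqF (wgt1_gt0 _ _ (rpos _ _))).
    rewrite (gt_eqF (e1 _)) /= /pstar /joint_of_cond => /orP[] /eqP ->; by rewrite ?mul0r ?mulr0.
  - exact: int_prod_cd dps dpu.
have pos0 : 0 <= Rintegral P setT f0.
  apply: Rintegral_ge0 => z _; have /andP[wa wb] := w01 0%N isT z.
  by rewrite mulr_ge0 ?mulr_ge0.
have pos2 : 0 <= Rintegral P setT f2.
  apply: Rintegral_ge0 => z _; have /andP[wa wb] := w01 1%N isT z.
  by rewrite mulr_ge0 ?mulr_ge0.
rewrite Hd HJ Hnu; apply: ln_bound => //.
have h1 : 0 < 1 / 2 * Rintegral P setT f1 by rewrite mulr_gt0.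
have h0 : 0 <= 1 / 2 * Rintegral P setT f0 by rewrite mulr_ge0.
exact: ltr_wpDl h0 h1.
Qed.


Lemma le_half_sum (a b c d : X * U -> R) :
  P.-integrable setT (EFin \o a) -> P.-integrable setT (EFin \o b) ->
  P.-integrable setT (EFin \o c) -> P.-integrable setT (EFin \o d) ->
  (forall z, setT z -> a z + b z <= c z + d z) ->
  1 / 2 * Rintegral P setT a + 1 / 2 * Rintegral P setT b <=
  1 / 2 * Rintegral P setT c + 1 / 2 * Rintegral P setT d.
Proof.
move=> ia ib ic id H; rewrite -!mulrDr ler_pM2l ?divr_gt0 //.
rewrite -RintegralD // -RintegralD //.
by apply: le_Rintegral => //; exact: integrableD_R.
Qed.

Lemma part2 (g : R) (hg : 0 < g) (pu eps : U -> R) (pstar_c delta_c : X -> U -> R) :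
      density muu pu ->
      measurable_fun setT eps -> (forall u, 0 <= eps u < 1) ->
      cond_density mux pstar_c -> cond_density mux delta_c ->
      let pstar := joint_of_cond pstar_c pu in
      let delta := joint_of_cond delta_c pu in
      let pj := pcontam eps pstar delta in
      let px := marg_x muu pj in
      (forall x, 0 < px x) -> (forall u, 0 < pu u) ->
      let rstar := fun x u => (1 - eps u) * pstar_c x u / px x in
      forall r : X -> U -> R,
        measurable_fun setT (fun z : X * U => r z.1 z.2) ->
        (forall x u, 0 < r x u) ->
        is_true (Jr mux muu g rstar px pu eps pstar <= Jr mux muu g r px pu eps pstar).
Proof.
move=> dpu meps heps dps dde pstar delta pj px pxpos pupos rstar r mr rpos.
have dpu' := dpu; case: dpu' => [mpu [pu0 _]].
have dps' := dps; case: dps' => [mps [ps0 _]].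
have dde' := dde; case: dde' => [mde [de0 _]].
have mpu2 : measurable_fun setT (fun z : X * U => pu z.2).
  exact: measurableT_comp mpu measurable_snd.
have meps2 : measurable_fun setT (fun z : X * U => eps z.2).
  exact: measurableT_comp meps measurable_snd.
have mpstar : measurable_fun setT (fun z : X * U => pstar z.1 z.2).
  exact: measurable_funM mps mpu2.
have mdelta : measurable_fun setT (fun z : X * U => delta z.1 z.2).
  exact: measurable_funM mde mpu2.
have ipstar : P.-integrable setT (EFin \o (fun z : X * U => pstar z.1 z.2)).
  exact: integrable_cd dps dpu.
have idelta : P.-integrable setT (EFin \o (fun z : X * U => delta z.1 z.2)).
  exact: integrable_cd dde dpu.
have pstar0 : forall x u, 0 <= pstar x u.
  by move=> x u; rewrite /pstar /joint_of_cond mulr_ge0.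
have delta0 : forall x u, 0 <= delta x u.
  by move=> x u; rewrite /delta /joint_of_cond mulr_ge0.
have e0 : forall u, 0 <= eps u by move=> u; have /andP[] := heps u.
have e1 : forall u, 0 < 1 - eps u by move=> u; have /andP[_ h] := heps u; rewrite subr_gt0.
have e1' : forall u, 1 - eps u <= 1 by move=> u; rewrite lerBlDr lerDl.
have e2 : forall u, eps u <= 1 by move=> u; have /andP[_ h] := heps u; exact: ltW.
have mpj : measurable_fun setT (fun z : X * U => pj z.1 z.2).
  apply: measurable_funD; apply: measurable_funM => //.
  by apply: measurable_funB => //; exact: measurable_cst.
have pj0 : forall x u, 0 <= pj x u.
  by move=> x u; rewrite /pj /pcontam addr_ge0 // mulr_ge0 // ltW.
have pjle : forall z : X * U, 0 <= pj z.1 z.2 <= pstar z.1 z.2 + delta z.1 z.2.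
  move=> z; rewrite pj0 /= /pj /pcontam.
  by rewrite lerD // ler_piMl.
have ipj : P.-integrable setT (EFin \o (fun z : X * U => pj z.1 z.2)).
  exact: integrable_le mpj pjle (integrableD_R ipstar idelta).
have [mpx [px0 Hle]] := marg_props mpj pj0.
have Hle2 := int_marg_pu mpj pj0 dpu.
have mpxpu : measurable_fun setT (fun z : X * U => px z.1 * pu z.2).
  by apply: measurable_funM => //; exact: measurableT_comp mpx measurable_fst.
have ipxpu : P.-integrable setT (EFin \o (fun z : X * U => px z.1 * pu z.2)).
  apply/integrableP; split; first exact/measurable_EFinP.
  rewrite (eq_integral (fun z : X * U => (px z.1 * pu z.2)%:E)); last first.
    by move=> z _; rewrite /= ger0_norm // mulr_ge0.
  apply: le_lt_trans Hle2 _; rewrite -ge0_fin_numE.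
    have H := integrable_fin_num measurableT ipj. exact: H.
  by apply: integral_ge0 => z _; rewrite lee_fin.
have iF : forall rr : X * U -> R, measurable_fun setT rr -> (forall z, 0 <= rr z) ->
    P.-integrable setT (EFin \o (fun z => wgt g (rr z) 0 * (px z.1 * pu z.2))) /\
    P.-integrable setT (EFin \o (fun z => wgt g (rr z) 1 * ((1 - eps z.2) * pstar z.1 z.2))).
  move=> rr mrr rr0; split.
  - apply: (integrable_le _ _ ipxpu).
      by apply: measurable_funM => //; exact: measurable_wgt.
    move=> z; have wa := wgt_ge0 g (rr z) 0; have wb := wgt_le1 g (rr z) 0 (ltW hg) (rr0 z) isT.
    by rewrite mulr_ge0 ?mulr_ge0 //= ler_piMl // mulr_ge0.
  - apply: (integrable_le _ _ ipstar).
      apply: measurable_funM; first exact: measurable_wgt.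
      by apply: measurable_funM => //; apply: measurable_funB => //; exact: measurable_cst.
    move=> z; have wa := wgt_ge0 g (rr z) 1; have wb := wgt_le1 g (rr z) 1 (ltW hg) (rr0 z) isT.
    rewrite mulr_ge0 ?mulr_ge0 ?(ltW (e1 _)) //=.
    by rewrite (le_trans (ler_piMl _ wb)) ?mulr_ge0 ?(ltW (e1 _)) // ler_piMl.
have mrs : measurable_fun setT (fun z : X * U => rstar z.1 z.2).
  apply: measurable_funM.
    by apply: measurable_funM => //; apply: measurable_funB => //; exact: measurable_cst.
  apply: measurable_inv_ge0; first exact: measurableT_comp mpx measurable_fst.
  by move=> z; exact: px0.
have rs0 : forall z : X * U, 0 <= rstar z.1 z.2.
  by move=> z; rewrite /rstar mulr_ge0 ?mulr_ge0 ?invr_ge0 ?(ltW (e1 _)).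
have mrr : measurable_fun setT (fun z : X * U => r z.1 z.2) := mr.
have rr0 : forall z : X * U, 0 <= r z.1 z.2 by move=> z; exact: ltW.
have [ia ib] := iF _ mrr rr0.
have [isa isb] := iF _ mrs rs0.
have posb : 0 < Rintegral P setT (fun z => wgt g (r z.1 z.2) 1 * ((1 - eps z.2) * pstar z.1 z.2)).
  apply: (Rint_pos ib _ mpstar) => //.
  - move=> z; have wa := wgt_ge0 g (r z.1 z.2) 1.
    by rewrite mulr_ge0 ?mulr_ge0 ?(ltW (e1 _)).
  - move=> z /eqP; rewrite !mulf_eq0 (gt_eqF (wgt1_gt0 _ _ (rpos _ _))).
    rewrite (gt_eqF (e1 _)) /= /pstar /joint_of_cond => /orP[] /eqP ->; by rewrite ?mul0r ?mulr0.
  - exact: int_prod_cd dps dpu.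
have posa : 0 <= Rintegral P setT (fun z => wgt g (r z.1 z.2) 0 * (px z.1 * pu z.2)).
  apply: Rintegral_ge0 => z _; have wa := wgt_ge0 g (r z.1 z.2) 0.
  by rewrite mulr_ge0 ?mulr_ge0.
have key : forall a b : R, 0 < a -> a <= b -> - (1 / g) * ln b <= - (1 / g) * ln a.
  move=> a b a0 ab; rewrite !mulNr lerN2 ler_pM2l ?divr_gt0 //.
  by rewrite ler_ln // posrE //; exact: lt_le_trans ab.
rewrite /Jr; apply: key.
  have h1 : 0 < 1 / 2 * Rintegral P setT (fun z => wgt g (r z.1 z.2) 1 * ((1 - eps z.2) * pstar z.1 z.2)) by rewrite mulr_gt0.
  have h0 : 0 <= 1 / 2 * Rintegral P setT (fun z => wgt g (r z.1 z.2) 0 * (px z.1 * pu z.2)) by rewrite mulr_ge0.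
  exact: ltr_wpDl h0 h1.
apply: (le_half_sum _ _ _ _ ia ib isa isb).
move=> z _; cbv beta.
have A0 : 0 < px z.1 * pu z.2 by rewrite mulr_gt0.
have B0 : 0 <= (1 - eps z.2) * pstar z.1 z.2 by rewrite mulr_ge0 ?(ltW (e1 _)).
have -> : rstar z.1 z.2 = (1 - eps z.2) * pstar z.1 z.2 / (px z.1 * pu z.2).
  rewrite /rstar /pstar /joint_of_cond; field.
  by rewrite (gt_eqF (pxpos _)) (gt_eqF (pupos _)).
rewrite (wgt_rhs _ _ _ hg A0 B0); exact: (wgt_upper _ _ _ _ hg (ltW A0) B0 (rr0 z)).
Qed.

End Meas.

Theorem theorem2 (R : realType) (g : R) (hg : 0 < g)
  (dx du : measure_display) (X : measurableType dx) (U : measurableType du)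
  (mux : {sigma_finite_measure set X -> \bar R})
  (muu : {sigma_finite_measure set U -> \bar R}) :
  (* d_gamma = J[r] + O(nu) as nu -> 0; the implied constant may depend
     on (gamma, the spaces and) the value J[r] *)
  (exists (C : R -> R) (nu0 : R), 0 < nu0 /\
    forall (pu : U -> R) (eps : U -> R) (pstar_c delta_c : X -> U -> R)
           (r : X -> U -> R),
      density muu pu ->
      measurable_fun setT eps -> (forall u, 0 <= eps u < 1) ->
      cond_density mux pstar_c -> cond_density mux delta_c ->
      measurable_fun setT (fun z : X * U => r z.1 z.2) ->
      (forall x u, 0 < r x u) ->
      let pstar := joint_of_cond pstar_c pu in
      let delta := joint_of_cond delta_c pu in
      let pj := pcontam eps pstar delta in
      let px := marg_x muu pj in
      let J := Jr mux muu g r px pu eps pstar in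
      nu mux muu g r eps delta <= nu0 ->
      `| dgamma mux muu g r (p_y_xu muu pj pu) - J |
        <= C J * nu mux muu g r eps delta)
  /\
  (* J[r] is minimized at r* = (1 - eps(u)) p*(x|u) / p(x) *)
  (forall (pu : U -> R) (eps : U -> R) (pstar_c delta_c : X -> U -> R),
      density muu pu ->
      measurable_fun setT eps -> (forall u, 0 <= eps u < 1) ->
      cond_density mux pstar_c -> cond_density mux delta_c ->
      let pstar := joint_of_cond pstar_c pu in
      let delta := joint_of_cond delta_c pu in
      let pj := pcontam eps pstar delta in
      let px := marg_x muu pj in
      (forall x, 0 < px x) -> (forall u, 0 < pu u) ->
      let rstar := fun x u => (1 - eps u) * pstar_c x u / px x in
      forall r : X -> U -> R,
        measurable_fun setT (fun z : X * U => r z.1 z.2) ->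
        (forall x u, 0 < r x u) ->
        Jr mux muu g rstar px pu eps pstar <= Jr mux muu g r px pu eps pstar).
Proof.
split.
- exists (fun J => expR (g * J) / (2 * g)), 1; split; first exact: ltr01.
  move=> pu eps pstar_c delta_c r dpu meps heps dps dde mr rpos pstar delta pj px J _.
  exact: (part1 _ _ _ _ _ _ _ _ hg _ _ _ _ _ dpu meps heps dps dde mr rpos).
- move=> pu eps pstar_c delta_c dpu meps heps dps dde pstar delta pj px pxpos pupos rstar r mr rpos.
  exact: (part2 _ _ _ _ _ _ _ _ hg _ _ _ _ dpu meps heps dps dde pxpos pupos _ mr rpos).
Qed.
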